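(* Let $\boldsymbol{A}\in\mathbb{R}^{n\times m}$ have full column rank and rows $\boldsymbol{a}_1,\dots,\boldsymbol{a}_n$. Let $\boldsymbol{b}\in\mathbb{R}^n$ (a vector, not to be confused with the batch size $b$), and let $\boldsymbol{x}_*=\arg\min_{\boldsymbol{x}}\frac12\|\boldsymbol{A}\boldsymbol{x}-\boldsymbol{b}\|_2^2$. Let the batch size $b$ divide $n$, let $d=n/b$, and let $\tau_1,\dots,\tau_d$ be a partition of $\{1,\dots,n\}$ into sets of size $b$. Let $\boldsymbol{A}_{\tau_i}$ and $\boldsymbol{b}_{\tau_i}$ denote the rows of $\boldsymbol{A}$ and the entries of $\boldsymbol{b}$ indexed by $\tau_i$. Let $\|\cdot\|$ be the spectral norm and $\sigma_{\min}(\boldsymbol{A})$ the smallest singular value of $\boldsymbol{A}$. Define $$p(\tau_i)=\frac{b}{2n}+\frac12\cdot\frac{\|\boldsymbol{A}_{\tau_i}\|^2}{\sum_{j=1}^d\|\boldsymbol{A}_{\tau_j}\|^2}.$$ Fix $\varepsilon>0$ and $\boldsymbol{x}_0$, and let $\varepsilon_0=\|\boldsymbol{x}_0-\boldsymbol{x}_*\|_2^2$. Consider the iteration $$\boldsymbol{x}_{k+1}=\boldsymbol{x}_k-\frac{\gamma}{p(\tau_{i_k})}\sum_{j\in\tau_{i_k}}(\langle\boldsymbol{a}_j,\boldsymbol{x}_k\rangle-b_j)\boldsymbol{a}_j,$$ with batches drawn i.i.d. from $p$ and step size $$\gamma=\frac{\frac14\varepsilon}{\varepsilon\sum_{i=1}^d\|\boldsymbol{A}_{\tau_i}\|^2+d\,\sigma_{\min}^{-2}(\boldsymbol{A})\sum_{i=1}^d\|\boldsymbol{A}_{\tau_i}\|^2\|\boldsymbol{A}_{\tau_i}\boldsymbol{x}_*-\boldsymbol{b}_{\tau_i}\|_2^2}.$$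 Then after $$k=\Big\lceil4\log(2\varepsilon_0/\varepsilon)\Big(\sigma_{\min}^{-2}(\boldsymbol{A})\sum_{i=1}^d\|\boldsymbol{A}_{\tau_i}\|^2+\frac{d\,\sigma_{\min}^{-4}(\boldsymbol{A})\sum_{i=1}^d\|\boldsymbol{A}_{\tau_i}\|^2\|\boldsymbol{A}_{\tau_i}\boldsymbol{x}_*-\boldsymbol{b}_{\tau_i}\|_2^2}{\varepsilon}\Big)\Big\rceil$$ iterations one has $\mathbb{E}^{(p)}\|\boldsymbol{x}_k-\boldsymbol{x}_*\|_2^2\le\varepsilon$.
   Context: $\mathbb{E}^{(p)}$ denotes expectation over the batch indices drawn independently at each iteration according to $p$. *)

(* Defs.v *)
From Stdlib Require Import Reals Lra Lia ZArith.
Open Scope R_scope.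

Fixpoint rsum (n : nat) (f : nat -> R) : R :=
  match n with
  | O => 0
  | S n' => rsum n' f + f n'
  end.

(* Vectors in R^m are functions nat -> R (coordinates 0..m-1);
   an n x m matrix is A : nat -> nat -> R, A j l = entry (row j, column l). *)

Definition rowdot (m : nat) (A : nat -> nat -> R) (j : nat) (x : nat -> R) : R :=
  rsum m (fun l => A j l * x l).

Definition nrm2 (m : nat) (x : nat -> R) : R := rsum m (fun l => x l ^ 2).

Definition full_column_rank (n m : nat) (A : nat -> nat -> R) : Prop :=
  forall x : nat -> R,
    (forall j, (j < n)%nat -> rowdot m A j x = 0) ->
    forall l, (l < m)%nat -> x l = 0.

Definition is_lsq_minimizer (n m : nat) (A : nat -> nat -> R) (bv : nat -> R)
    (xs : nat -> R) : Prop :=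
  forall x : nat -> R,
    / 2 * rsum n (fun j => (rowdot m A j xs - bv j) ^ 2)
    <= / 2 * rsum n (fun j => (rowdot m A j x - bv j) ^ 2).

Definition is_eigval_AtA (n m : nat) (A : nat -> nat -> R) (lam : R) : Prop :=
  exists v : nat -> R,
    (exists l, (l < m)%nat /\ v l <> 0) /\
    forall l, (l < m)%nat ->
      rsum n (fun j => A j l * rowdot m A j v) = lam * v l.

Definition is_sigma_min (n m : nat) (A : nat -> nat -> R) (s : R) : Prop :=
  0 <= s /\ is_eigval_AtA n m A (s ^ 2) /\
  forall lam, is_eigval_AtA n m A lam -> s ^ 2 <= lam.

Definition is_block_spectral_norm (n m : nat) (A : nat -> nat -> R)
    (g : nat -> nat) (i : nat) (s : R) : Prop :=
  is_lub (fun r => exists x : nat -> R, nrm2 m x = 1 /\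
            r = sqrt (rsum n (fun j => if Nat.eqb (g j) i
                                       then rowdot m A j x ^ 2 else 0))) s.

(* g assigns each row index j < n to its batch g j < d; the batches
   tau_i = { j < n | g j = i } (i < d) have size bsz each, so they
   partition {0..n-1} into d sets of size bsz. *)
Definition is_batch_partition (n d bsz : nat) (g : nat -> nat) : Prop :=
  (forall j, (j < n)%nat -> (g j < d)%nat) /\
  (forall i, (i < d)%nat ->
     length (List.filter (fun j => Nat.eqb (g j) i) (List.seq 0 n)) = bsz).

Definition sgd_step (n m : nat) (A : nat -> nat -> R) (bv : nat -> R)
    (g : nat -> nat) (p : nat -> R) (gamma : R) (i : nat) (x : nat -> R)
    : nat -> R :=
  fun l => x l - gamma / p i *
    rsum n (fun j => if Nat.eqb (g j) i
                     then (rowdot m A j x - bv j) * A j l else 0).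

Fixpoint sgd_iter (n m : nat) (A : nat -> nat -> R) (bv : nat -> R)
    (g : nat -> nat) (p : nat -> R) (gamma : R) (x0 : nat -> R)
    (s : nat -> nat) (k : nat) : nat -> R :=
  match k with
  | O => x0
  | S k' => sgd_step n m A bv g p gamma (s k')
              (sgd_iter n m A bv g p gamma x0 s k')
  end.

(* Expectation E^(p) of F over the first k batch indices, drawn i.i.d.
   from the distribution p on {0..d-1}. F should depend only on s 0..s (k-1). *)
Definition scons (i : nat) (s : nat -> nat) : nat -> nat :=
  fun t => match t with O => i | S t' => s t' end.

Fixpoint expect (d : nat) (p : nat -> R) (k : nat) (F : (nat -> nat) -> R) : R :=
  match k with
  | O => F (fun _ => O)
  | S k' => rsum d (fun i => p i * expect d p k' (fun s => F (scons i s)))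
  end.

Definition ceilR (x : R) : Z := (- Int_part (- x))%Z.

(* Main.v *)
Require Import Defs.
From Stdlib Require Import Reals ZArith Lra Lia Classical.
Open Scope R_scope.

Lemma rsum_ext n f g : (forall i, (i < n)%nat -> f i = g i) -> rsum n f = rsum n g.
Proof. induction n; simpl; intros H; [reflexivity|]. rewrite IHn by (intros; apply H; lia). rewrite H by lia. reflexivity. Qed.

Lemma rsum_plus n f g : rsum n (fun i => f i + g i) = rsum n f + rsum n g.
Proof. induction n; simpl; [lra|]. rewrite IHn. lra. Qed.

Lemma rsum_minus n f g : rsum n (fun i => f i - g i) = rsum n f - rsum n g.
Proof. induction n; simpl; [lra|]. rewrite IHn. lra. Qed.

Lemma rsum_mult_l n c f : rsum n (fun i => c * f i) = c * rsum n f.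
Proof. induction n; simpl; [lra|]. rewrite IHn. lra. Qed.

Lemma rsum_mult_r n c f : rsum n (fun i => f i * c) = rsum n f * c.
Proof. induction n; simpl; [lra|]. rewrite IHn. lra. Qed.

Lemma rsum_const0 n : rsum n (fun _ => 0) = 0.
Proof. induction n; simpl; [lra|]. rewrite IHn. lra. Qed.

Lemma rsum_zero n f : (forall i, (i < n)%nat -> f i = 0) -> rsum n f = 0.
Proof. intros H. rewrite (rsum_ext n f (fun _ => 0)) by auto. apply rsum_const0. Qed.

Lemma rsum_le n f g : (forall i, (i < n)%nat -> f i <= g i) -> rsum n f <= rsum n g.
Proof. induction n; simpl; intros H; [lra|]. assert (H1 := H n (Nat.lt_succ_diag_r n)).
 assert (rsum n f <= rsum n g) by (apply IHn; intros; apply H; lia). lra. Qed.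

Lemma rsum_nonneg n f : (forall i, (i < n)%nat -> 0 <= f i) -> 0 <= rsum n f.
Proof. intros H. rewrite <- (rsum_const0 n). apply rsum_le. auto. Qed.

Lemma rsum_term_le n f l : (forall i, (i < n)%nat -> 0 <= f i) -> (l < n)%nat -> f l <= rsum n f.
Proof. induction n; simpl; intros H Hl; [lia|].
 destruct (Nat.eq_dec l n) as [->|Hne].
 - assert (0 <= rsum n f) by (apply rsum_nonneg; intros; apply H; lia). lra.
 - assert (f l <= rsum n f) by (apply IHn; [intros; apply H; lia|lia]).
   assert (0 <= f n) by (apply H; lia). lra. Qed.

Lemma rsum_swap n m (f : nat -> nat -> R) :
  rsum n (fun i => rsum m (fun j => f i j)) = rsum m (fun j => rsum n (fun i => f i j)).
Proof. induction n; simpl. - rewrite rsum_const0; reflexivity.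
 - rewrite IHn. rewrite <- rsum_plus. reflexivity. Qed.

Lemma rsum_kron_l m l f : (l < m)%nat -> rsum m (fun l' => if Nat.eqb l l' then f l' else 0) = f l.
Proof. induction m; simpl; intros H; [lia|].
 destruct (Nat.eq_dec l m) as [->|Hne].
 - rewrite Nat.eqb_refl. rewrite rsum_zero; [lra|]. intros i Hi.
   destruct (Nat.eqb m i) eqn:E; [apply Nat.eqb_eq in E; lia|reflexivity].
 - rewrite IHm by lia. destruct (Nat.eqb l m) eqn:E; [apply Nat.eqb_eq in E; lia|lra]. Qed.

Lemma rsum_kron_r m l f : (l < m)%nat -> rsum m (fun l' => if Nat.eqb l' l then f l' else 0) = f l.
Proof. intros H. rewrite <- (rsum_kron_l m l f H). apply rsum_ext. intros i _.
 rewrite Nat.eqb_sym. reflexivity. Qed.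

Lemma rsum_partition n d (g : nat -> nat) (f : nat -> R) :
  (forall j, (j < n)%nat -> (g j < d)%nat) ->
  rsum d (fun i => rsum n (fun j => if Nat.eqb (g j) i then f j else 0)) = rsum n f.
Proof. intros H. rewrite rsum_swap. apply rsum_ext. intros j Hj.
 apply (rsum_kron_l d (g j) (fun _ => f j)). auto. Qed.

Lemma rsum_partition_mul n d (g : nat -> nat) (c : nat -> R) (f : nat -> R) :
  rsum d (fun i => c i * rsum n (fun j => if Nat.eqb (g j) i then f j else 0)) =
  rsum d (fun i => rsum n (fun j => if Nat.eqb (g j) i then c i * f j else 0)).
Proof. apply rsum_ext. intros i _. rewrite <- rsum_mult_l. apply rsum_ext. intros j _.
 destruct (Nat.eqb (g j) i); lra. Qed.

Lemma disc A B C : 0 <= A -> (forall t, 0 <= A * t ^ 2 + 2 * B * t + C) -> B ^ 2 <= A * C.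
Proof. intros HA H. destruct (Rle_lt_or_eq_dec 0 A HA) as [Hp|H0].
 - specialize (H (- B / A)). assert (E : A * (- B / A) ^ 2 + 2 * B * (- B / A) + C = C - B^2 / A) by (field; lra).
   rewrite E in H. assert (B^2 / A <= C) by lra.
   assert (B ^ 2 = (B^2 / A) * A) by (field; lra). nra.
 - subst A. destruct (Req_dec B 0) as [->|Hb]; [lra|].
   specialize (H (- (Rabs C + 1) / (2 * B))).
   assert (E : 0 * (- (Rabs C + 1) / (2 * B)) ^ 2 + 2 * B * (- (Rabs C + 1) / (2 * B)) + C = C - (Rabs C + 1)) by (field; lra).
   rewrite E in H. pose proof (Rle_abs C). lra. Qed.

Lemma CS m f h : (rsum m (fun l => f l * h l)) ^ 2 <= rsum m (fun l => f l ^ 2) * rsum m (fun l => h l ^ 2).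
Proof. apply disc. apply rsum_nonneg; intros; apply pow2_ge_0.
 intros t. assert (E : rsum m (fun l => (t * f l + h l) ^ 2) = rsum m (fun l => f l ^ 2) * t ^ 2 + 2 * rsum m (fun l => f l * h l) * t + rsum m (fun l => h l ^ 2)).
 { rewrite (rsum_ext m _ (fun l => (t^2 * f l ^ 2 + (2 * t) * (f l * h l)) + h l ^ 2)) by (intros; ring).
   rewrite !rsum_plus, !rsum_mult_l. ring. }
 rewrite <- E. apply rsum_nonneg; intros; apply pow2_ge_0. Qed.

Definition quad m (c : nat -> nat -> R) (x : nat -> R) := rsum m (fun l => rsum m (fun l' => c l l' * x l * x l')).
Definition bil m (c : nat -> nat -> R) (x y : nat -> R) := rsum m (fun l => rsum m (fun l' => c l l' * x l * y l')).
Definition sym (c : nat -> nat -> R) := forall l l', c l l' = c l' l.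

Lemma bil_sym m c x y : sym c -> bil m c y x = bil m c x y.
Proof. intros Hs. unfold bil. rewrite rsum_swap. apply rsum_ext; intros; apply rsum_ext; intros.
 rewrite Hs. ring. Qed.

Lemma quad_add m c v w t : sym c ->
  quad m c (fun l => v l + t * w l) = quad m c v + 2 * t * bil m c v w + t ^ 2 * quad m c w.
Proof. intros Hs. unfold quad.
 rewrite (rsum_ext m _ (fun l => (rsum m (fun l' => c l l' * v l * v l') + t * rsum m (fun l' => c l l' * v l * w l'))
     + (t * rsum m (fun l' => c l l' * w l * v l') + t^2 * rsum m (fun l' => c l l' * w l * w l')))).
 2:{ intros. rewrite <- !rsum_mult_l, <- !rsum_plus. apply rsum_ext; intros; ring. }
 rewrite !rsum_plus, !rsum_mult_l. fold (bil m c v w). fold (bil m c w v). rewrite bil_sym by auto. ring. Qed.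

Lemma quad_scal m c x a : quad m c (fun l => a * x l) = a ^ 2 * quad m c x.
Proof. unfold quad. rewrite <- rsum_mult_l. apply rsum_ext; intros. rewrite <- rsum_mult_l.
 apply rsum_ext; intros. ring. Qed.

Lemma quad_S m c x : sym c -> quad (S m) c x = quad m c x + 2 * x m * rsum m (fun l => c m l * x l) + c m m * x m ^ 2.
Proof. intros Hs. unfold quad. simpl. rewrite rsum_plus.
 assert (E : rsum m (fun l => c l m * x l * x m) = x m * rsum m (fun l => c m l * x l)).
 { rewrite <- rsum_mult_l. apply rsum_ext; intros. rewrite Hs. ring. }
 rewrite E. assert (E2 : rsum m (fun l' => c m l' * x m * x l') = x m * rsum m (fun l => c m l * x l)).
 { rewrite <- rsum_mult_l. apply rsum_ext; intros. ring. }
 rewrite E2. ring. Qed.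

Lemma quad_ext m c x y : (forall l, (l < m)%nat -> x l = y l) -> quad m c x = quad m c y.
Proof. intros H. unfold quad. apply rsum_ext; intros; apply rsum_ext; intros. rewrite !H by auto. reflexivity. Qed.

Lemma nrm2_ext m x y : (forall l, (l < m)%nat -> x l = y l) -> nrm2 m x = nrm2 m y.
Proof. intros H. unfold nrm2. apply rsum_ext; intros. rewrite H by auto. reflexivity. Qed.

Lemma nrm2_nonneg m x : 0 <= nrm2 m x.
Proof. apply rsum_nonneg; intros; apply pow2_ge_0. Qed.

Lemma nrm2_zero m x : nrm2 m x = 0 -> forall l, (l < m)%nat -> x l = 0.
Proof. intros H l Hl. assert (x l ^ 2 <= nrm2 m x) by (apply (rsum_term_le m (fun l => x l ^2)); [intros; apply pow2_ge_0|auto]).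
 nra. Qed.

Definition upd (x : nat -> R) (m : nat) (t : R) := fun l => if Nat.eqb l m then t else x l.

Lemma upd_lt x m t l : (l < m)%nat -> upd x m t l = x l.
Proof. intros H. unfold upd. destruct (Nat.eqb l m) eqn:E; [apply Nat.eqb_eq in E; lia|auto]. Qed.
Lemma upd_eq x m t : upd x m t m = t.
Proof. unfold upd. rewrite Nat.eqb_refl. auto. Qed.

Lemma lemmaK m : forall c, sym c -> (forall x, 0 <= quad m c x) ->
  (exists v, nrm2 m v <> 0 /\ quad m c v = 0) \/ (exists k, 0 < k /\ forall x, k * nrm2 m x <= quad m c x).
Proof.
 induction m as [|m IH]; intros c Hs Hpsd.
 - right. exists 1. split; [lra|]. intros x. unfold nrm2, quad; simpl; lra.
 - set (a := c m m). set (beta := fun x => rsum m (fun l => c m l * x l)).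
   assert (Hq : forall x, quad (S m) c x = quad m c x + 2 * x m * beta x + a * x m ^ 2) by (intros; apply quad_S; auto).
   set (em := upd (fun _ => 0) m 1).
   assert (Hem : quad (S m) c em = a).
   { rewrite Hq. unfold em. rewrite upd_eq.
     rewrite (quad_ext m c _ (fun l => 0 * 1)) by (intros; rewrite upd_lt; auto; ring).
     rewrite quad_scal. unfold beta. rewrite rsum_zero. ring. intros; rewrite upd_lt; auto; ring. }
   assert (Hnem : nrm2 (S m) em = 1).
   { unfold nrm2. simpl. unfold em. rewrite upd_eq. rewrite rsum_zero. ring. intros; rewrite upd_lt; auto; ring. }
   assert (Ha : 0 <= a) by (rewrite <- Hem; auto).
   destruct (Rle_lt_or_eq_dec 0 a Ha) as [Hap|Ha0].
   2:{ left. exists em. split. lra. lra. }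
   set (c' := fun l l' => c l l' - c m l * c m l' / a).
   assert (Hs' : sym c'). { unfold sym, c'. intros l l'. rewrite (Hs l l'). rewrite (Rmult_comm (c m l)). reflexivity. }
   assert (Hq' : forall x, quad m c' x = quad m c x - beta x ^ 2 / a).
   { intros x. unfold quad, c'.
     rewrite (rsum_ext m _ (fun l => rsum m (fun l' => c l l' * x l * x l') - (c m l * x l / a) * beta x)).
     2:{ intros. unfold beta. rewrite <- rsum_mult_l, <- rsum_minus. apply rsum_ext; intros. field. lra. }
     rewrite rsum_minus, rsum_mult_r. unfold beta at 1. 
     rewrite (rsum_ext m (fun l => c m l * x l / a) (fun l => / a * (c m l * x l))) by (intros; field; lra).
     rewrite rsum_mult_l. fold (beta x). field. lra. }
   assert (Hext : forall x, quad (S m) c (upd x m (- beta x / a)) = quad m c' x).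
   { intros x. rewrite Hq, Hq'. rewrite upd_eq. rewrite (quad_ext m c _ x) by (intros; apply upd_lt; auto).
     assert (beta (upd x m (- beta x / a)) = beta x) by (unfold beta; apply rsum_ext; intros; rewrite upd_lt; auto).
     rewrite H. field. lra. }
   assert (Hpsd' : forall x, 0 <= quad m c' x) by (intros; rewrite <- Hext; auto).
   destruct (IH c' Hs' Hpsd') as [[v [Hv1 Hv2]]|[k [Hk1 Hk2]]].
   + left. exists (upd v m (- beta v / a)). split.
     * unfold nrm2. simpl. rewrite upd_eq.
       rewrite (rsum_ext m _ (fun l => v l ^ 2)) by (intros; rewrite upd_lt; auto).
       fold (nrm2 m v). pose proof (nrm2_nonneg m v). intro. nra.
     * rewrite Hext. auto.
   + right. set (B := rsum m (fun l => c m l ^ 2)).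
     assert (HB : 0 <= B) by (apply rsum_nonneg; intros; apply pow2_ge_0).
     set (K := 1 + 2 * B / a ^ 2).
     assert (HK : 1 <= K). { unfold K. assert (0 <= B / a^2) by (apply Rmult_le_pos; [lra| apply Rlt_le, Rinv_0_lt_compat; nra]). lra. }
     exists (Rmin (a / 2) (k / K)). split.
     { apply Rmin_glb_lt. lra. apply Rdiv_lt_0_compat; lra. }
     intros x. set (N := nrm2 m x). set (y := x m + beta x / a).
     assert (HN : nrm2 (S m) x = N + x m ^ 2) by (unfold nrm2; simpl; fold (nrm2 m x); reflexivity).
     assert (Hqx : quad (S m) c x = quad m c' x + a * y ^ 2).
     { rewrite Hq, Hq'. unfold y. field. lra. }
     assert (HCS : beta x ^ 2 <= B * N) by (unfold beta, B, N, nrm2; apply CS).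
     assert (Hxm : x m ^ 2 <= 2 * y ^ 2 + 2 * (B * N) / a ^ 2).
     { assert (x m = y - beta x / a) by (unfold y; field; lra). rewrite H.
       assert ((y - beta x / a) ^ 2 <= 2 * y ^ 2 + 2 * (beta x ^ 2 / a ^ 2)).
       { assert ((y - beta x / a) ^ 2 = y^2 - 2 * y * (beta x / a) + beta x ^ 2 / a ^ 2) by (field; lra).
         rewrite H0. assert (0 <= (y + beta x / a)^2) by apply pow2_ge_0.
         assert ((y + beta x / a)^2 = y^2 + 2 * y * (beta x / a) + beta x ^ 2 / a ^ 2) by (field; lra). lra. }
       assert (beta x ^ 2 / a ^ 2 <= (B * N) / a ^ 2) by (apply Rmult_le_compat_r; [apply Rlt_le, Rinv_0_lt_compat; nra| auto]).
       lra. }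
     rewrite HN, Hqx. specialize (Hk2 x). fold N in Hk2.
     set (kk := Rmin (a / 2) (k / K)).
     assert (H1 : kk <= a / 2) by apply Rmin_l. assert (H2 : kk <= k / K) by apply Rmin_r.
     assert (Hkk : 0 < kk) by (apply Rmin_glb_lt; [lra|apply Rdiv_lt_0_compat; lra]).
     assert (HN0 : 0 <= N) by apply nrm2_nonneg.
     assert (H3 : kk * K <= k) by (apply (Rmult_le_compat_r K) in H2; [|lra]; replace (k / K * K) with k in H2 by (field; lra); lra).
     assert (H4 : kk * (N + x m ^ 2) <= kk * (N + 2 * y ^ 2 + 2 * (B * N) / a ^ 2)) by (apply Rmult_le_compat_l; lra).
     assert (E : N + 2 * y ^ 2 + 2 * (B * N) / a ^ 2 = K * N + 2 * y ^ 2) by (unfold K; field; lra).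
     rewrite E in H4.
     assert (kk * K * N <= k * N) by (apply Rmult_le_compat_r; lra).
     assert (kk * (2 * y ^ 2) <= a * y ^ 2) by (assert (0 <= y^2) by nra; nra).
     nra.
Qed.

Lemma stationary m c v : sym c -> (forall x, 0 <= quad m c x) -> quad m c v = 0 ->
  forall w, bil m c v w = 0.
Proof. intros Hs Hp Hv w.
 assert (H := disc (quad m c w) (bil m c v w) 0 (Hp w)).
 assert (bil m c v w ^ 2 <= 0). { rewrite <- (Rmult_0_r (quad m c w)). apply H. intros t.
   assert (E := quad_add m c v w t Hs). rewrite Hv in E. specialize (Hp (fun l => v l + t * w l)). nra. }
 nra. Qed.

Lemma bil_kron m c v l0 : (l0 < m)%nat ->
  bil m c v (fun l' => if Nat.eqb l' l0 then 1 else 0) = rsum m (fun l => c l l0 * v l).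
Proof. intros H. unfold bil. apply rsum_ext. intros l _.
 rewrite (rsum_ext m _ (fun l' => if Nat.eqb l' l0 then c l l' * v l else 0)).
 - apply (rsum_kron_r m l0 (fun l' => c l l' * v l)). auto.
 - intros. destruct (Nat.eqb i l0); ring. Qed.

Lemma min_eig m c : sym c -> (exists x, nrm2 m x = 1) -> (forall x, 0 <= quad m c x) ->
  exists mu v, nrm2 m v <> 0 /\ (forall l, (l < m)%nat -> rsum m (fun l' => c l l' * v l') = mu * v l)
    /\ forall x, mu * nrm2 m x <= quad m c x.
Proof.
 intros Hs [x1 Hx1] Hp.
 set (E := fun r => exists x, nrm2 m x = 1 /\ r = - quad m c x).
 assert (Hb : bound E). { exists 0. intros r [x [_ ->]]. specialize (Hp x). lra. }
 assert (He : exists r, E r) by (exists (- quad m c x1); exists x1; auto).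
 destruct (completeness E Hb He) as [L [HL1 HL2]].
 set (mu := - L).
 assert (Ha : forall x, nrm2 m x = 1 -> mu <= quad m c x).
 { intros x Hx. assert (- quad m c x <= L) by (apply HL1; exists x; auto). unfold mu; lra. }
 assert (Hbb : forall eps, 0 < eps -> exists x, nrm2 m x = 1 /\ quad m c x < mu + eps).
 { intros eps He0. apply NNPP. intros Hn.
   assert (is_upper_bound E (L - eps)).
   { intros r [x [Hx ->]]. destruct (Rle_or_lt (- quad m c x) (L - eps)) as [|Hlt]; auto.
     exfalso. apply Hn. exists x. split; auto. unfold mu; lra. }
   specialize (HL2 _ H). lra. }
 assert (Hc : forall x, mu * nrm2 m x <= quad m c x).
 { intros x. pose proof (nrm2_nonneg m x) as HN. destruct (Rle_lt_or_eq_dec 0 _ HN) as [Hpos|H0].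
   - set (s := / sqrt (nrm2 m x)).
     assert (Hs2 : s ^ 2 * nrm2 m x = 1).
     { unfold s. rewrite pow_inv. simpl. rewrite Rmult_1_r, sqrt_sqrt by lra. field. lra. }
     assert (Hn1 : nrm2 m (fun l => s * x l) = 1).
     { rewrite <- Hs2. unfold nrm2. rewrite <- rsum_mult_l. apply rsum_ext; intros; ring. }
     specialize (Ha _ Hn1). rewrite quad_scal in Ha.
     assert (0 < s ^ 2) by (assert (0 <= s^2) by apply pow2_ge_0; nra).
     assert (mu * (s^2 * nrm2 m x) <= s^2 * quad m c x) by (rewrite Hs2; lra).
     nra.
   - rewrite <- H0. rewrite (quad_ext m c x (fun l => 0 * x l)).
     + rewrite quad_scal. lra.
     + intros l Hl. rewrite (nrm2_zero m x (eq_sym H0) l Hl). ring. }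
 set (c2 := fun l l' => c l l' - (if Nat.eqb l l' then mu else 0)).
 assert (Hs2 : sym c2). { unfold sym, c2. intros l l'. rewrite (Hs l l'), Nat.eqb_sym. reflexivity. }
 assert (Hq2 : forall x, quad m c2 x = quad m c x - mu * nrm2 m x).
 { intros x. unfold quad, c2, nrm2. rewrite <- rsum_mult_l, <- rsum_minus. apply rsum_ext. intros l Hl.
   rewrite (rsum_ext m _ (fun l' => c l l' * x l * x l' - (if Nat.eqb l l' then mu * x l * x l' else 0))).
   2:{ intros. destruct (Nat.eqb l i); ring. }
   rewrite rsum_minus. rewrite (rsum_kron_l m l (fun l' => mu * x l * x l')) by auto. ring. }
 assert (Hp2 : forall x, 0 <= quad m c2 x) by (intros x; rewrite Hq2; specialize (Hc x); lra).
 destruct (lemmaK m c2 Hs2 Hp2) as [[v [Hv1 Hv2]]|[k [Hk1 Hk2]]].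
 - exists mu, v. split; auto. split; auto.
   intros l Hl. assert (H := stationary m c2 v Hs2 Hp2 Hv2 (fun l' => if Nat.eqb l' l then 1 else 0)).
   rewrite bil_kron in H by auto. unfold c2 in H.
   rewrite (rsum_ext m _ (fun l' => c l l' * v l' - (if Nat.eqb l' l then mu * v l' else 0))) in H.
   2:{ intros. rewrite (Hs i l). destruct (Nat.eqb i l); ring. }
   rewrite rsum_minus, (rsum_kron_r m l (fun l' => mu * v l')) in H by auto. lra.
 - exfalso. destruct (Hbb k Hk1) as [x [Hx1' Hx2]]. specialize (Hk2 x). rewrite Hq2, Hx1' in Hk2. lra.
Qed.

Definition Qf n m A x := rsum n (fun j => rowdot m A j x ^ 2).
Definition cA n (A : nat -> nat -> R) l l' := rsum n (fun j => A j l * A j l').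

Lemma rowdot_lin m A j x y t : rowdot m A j (fun l => x l + t * y l) = rowdot m A j x + t * rowdot m A j y.
Proof. unfold rowdot. rewrite <- rsum_mult_l, <- rsum_plus. apply rsum_ext; intros; ring. Qed.
Lemma rowdot_sub m A j x y : rowdot m A j (fun l => x l - y l) = rowdot m A j x - rowdot m A j y.
Proof. unfold rowdot. rewrite <- rsum_minus. apply rsum_ext; intros; ring. Qed.
Lemma rowdot_scal m A j x t : rowdot m A j (fun l => t * x l) = t * rowdot m A j x.
Proof. unfold rowdot. rewrite <- rsum_mult_l. apply rsum_ext; intros; ring. Qed.
Lemma rowdot_ext m A j x y : (forall l, (l < m)%nat -> x l = y l) -> rowdot m A j x = rowdot m A j y.
Proof. intros H. unfold rowdot. apply rsum_ext; intros. rewrite H; auto. Qed.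

Lemma cA_row n m A l v : rsum m (fun l' => cA n A l l' * v l') = rsum n (fun j => A j l * rowdot m A j v).
Proof. unfold cA, rowdot.
 rewrite (rsum_ext m _ (fun l' => rsum n (fun j => A j l * A j l' * v l'))) by (intros; rewrite <- rsum_mult_r; reflexivity).
 rewrite rsum_swap. apply rsum_ext; intros j _. rewrite <- rsum_mult_l.
 apply rsum_ext; intros. ring. Qed.

Lemma Qf_dual n m A x : Qf n m A x = rsum m (fun l => x l * rsum n (fun j => A j l * rowdot m A j x)).
Proof. unfold Qf.
 rewrite (rsum_ext m _ (fun l => rsum n (fun j => x l * (A j l * rowdot m A j x)))) by (intros; rewrite rsum_mult_l; reflexivity).
 rewrite rsum_swap. apply rsum_ext; intros j _.
 rewrite (rsum_ext m _ (fun l => (A j l * x l) * rowdot m A j x)) by (intros; ring).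
 rewrite rsum_mult_r. fold (rowdot m A j x). ring. Qed.

Lemma Qf_quad n m A x : quad m (cA n A) x = Qf n m A x.
Proof. rewrite Qf_dual. unfold quad. apply rsum_ext. intros l _.
 rewrite <- cA_row, <- rsum_mult_l. apply rsum_ext. intros; ring. Qed.

Lemma Qf_nonneg n m A x : 0 <= Qf n m A x.
Proof. apply nrm2_nonneg. Qed.

Lemma unit_exists m : (0 < m)%nat -> exists x, nrm2 m x = 1.
Proof. intros H. exists (fun l => if Nat.eqb l 0 then 1 else 0). unfold nrm2.
 rewrite (rsum_ext m _ (fun l => if Nat.eqb l 0 then 1 else 0)).
 - apply (rsum_kron_r m 0 (fun _ => 1)). auto.
 - intros. destruct (Nat.eqb i 0); ring. Qed.

Lemma sigma_facts n m A sigma : full_column_rank n m A -> is_sigma_min n m A sigma ->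
  (0 < m)%nat /\ 0 < sigma /\ (forall x, sigma ^ 2 * nrm2 m x <= Qf n m A x) /\
  exists v, 0 < nrm2 m v /\ Qf n m A v = sigma ^ 2 * nrm2 m v.
Proof.
 intros HA [Hs0 [[v0 [[l0 [Hl0 Hv0]] Heig]] Hmin]].
 assert (Hm : (0 < m)%nat) by lia.
 assert (HQv0 : Qf n m A v0 = sigma ^ 2 * nrm2 m v0).
 { rewrite Qf_dual. unfold nrm2. rewrite <- rsum_mult_l. apply rsum_ext. intros l Hl.
   rewrite Heig by auto. ring. }
 assert (Hnv0 : 0 < nrm2 m v0).
 { destruct (Rle_lt_or_eq_dec 0 _ (nrm2_nonneg m v0)) as [|H0]; auto.
   exfalso. apply Hv0. apply (nrm2_zero m v0); auto. }
 split; auto. split.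
 - destruct (Rle_lt_or_eq_dec 0 _ Hs0) as [|H0]; auto. exfalso. subst sigma.
   assert (HQ : Qf n m A v0 = 0) by (rewrite HQv0; ring).
   apply Hv0. apply (HA v0); auto. intros j Hj. apply (nrm2_zero n (fun j => rowdot m A j v0) HQ j Hj).
 - split.
   + assert (Hsym : sym (cA n A)). { intros l l'. unfold cA. apply rsum_ext; intros; ring. }
     assert (Hpsd : forall x, 0 <= quad m (cA n A) x) by (intros; rewrite Qf_quad; apply Qf_nonneg).
     destruct (min_eig m (cA n A) Hsym (unit_exists m Hm) Hpsd) as [mu [v [Hv1 [Hv2 Hv3]]]].
     assert (Heig' : is_eigval_AtA n m A mu).
     { exists v. split.
       - apply NNPP. intros Hn. apply Hv1. apply rsum_zero. intros l Hl.
         destruct (Req_dec (v l) 0) as [->|Hne]; [ring|]. exfalso. apply Hn. exists l. auto.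
       - intros l Hl. rewrite <- cA_row. auto. }
     specialize (Hmin mu Heig'). intros x. specialize (Hv3 x). rewrite Qf_quad in Hv3.
     pose proof (nrm2_nonneg m x). nra.
   + exists v0. auto.
Qed.

Definition blk n m A (g : nat -> nat) i x := rsum n (fun j => if Nat.eqb (g j) i then rowdot m A j x ^ 2 else 0).

Lemma blk_nonneg n m A g i x : 0 <= blk n m A g i x.
Proof. apply rsum_nonneg; intros. destruct (Nat.eqb (g i0) i); [apply pow2_ge_0|lra]. Qed.

Lemma blk_scal n m A g i x t : blk n m A g i (fun l => t * x l) = t ^ 2 * blk n m A g i x.
Proof. unfold blk. rewrite <- rsum_mult_l. apply rsum_ext; intros. rewrite rowdot_scal.
 destruct (Nat.eqb (g i0) i); ring. Qed.

Lemma blk_bound n m A g i s : (0 < m)%nat -> is_block_spectral_norm n m A g i s ->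
  0 <= s /\ forall x, blk n m A g i x <= s ^ 2 * nrm2 m x.
Proof. intros Hm [Hub _].
 assert (H1 : forall x, nrm2 m x = 1 -> blk n m A g i x <= s ^ 2 /\ 0 <= s).
 { intros x Hx. assert (Hle : sqrt (blk n m A g i x) <= s) by (apply Hub; exists x; split; auto).
   pose proof (sqrt_pos (blk n m A g i x)). split; [|lra].
   rewrite <- (sqrt_sqrt (blk n m A g i x)) by apply blk_nonneg. simpl. nra. }
 destruct (unit_exists m Hm) as [x1 Hx1]. split; [apply (H1 x1 Hx1)|].
 intros x. pose proof (nrm2_nonneg m x) as HN. destruct (Rle_lt_or_eq_dec 0 _ HN) as [Hpos|H0].
 - set (t := / sqrt (nrm2 m x)).
   assert (Ht2 : t ^ 2 * nrm2 m x = 1).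
   { unfold t. rewrite pow_inv. simpl. rewrite Rmult_1_r, sqrt_sqrt by lra. field. lra. }
   assert (Hn1 : nrm2 m (fun l => t * x l) = 1).
   { rewrite <- Ht2. unfold nrm2. rewrite <- rsum_mult_l. apply rsum_ext; intros; ring. }
   destruct (H1 _ Hn1) as [Hb _]. rewrite blk_scal in Hb.
   assert (0 <= t^2) by apply pow2_ge_0.
   assert (t^2 * blk n m A g i x * nrm2 m x <= s^2 * nrm2 m x) by (apply Rmult_le_compat_r; lra).
   assert (E : t^2 * blk n m A g i x * nrm2 m x = blk n m A g i x) by (transitivity (blk n m A g i x * (t^2 * nrm2 m x)); [ring|rewrite Ht2; ring]).
   lra.
 - rewrite <- H0. unfold blk. rewrite rsum_zero. lra. intros j Hj.
   rewrite (rowdot_ext m A j x (fun _ => 0)). unfold rowdot. rewrite rsum_zero. destruct (Nat.eqb (g j) i); ring.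
   intros; ring. intros l Hl. apply (nrm2_zero m x (eq_sym H0) l Hl). Qed.

Lemma adj_bound n m A g i s (u : nat -> R) : 0 <= s -> (forall x, blk n m A g i x <= s ^ 2 * nrm2 m x) ->
  nrm2 m (fun l => rsum n (fun j => if Nat.eqb (g j) i then u j * A j l else 0))
  <= s ^ 2 * rsum n (fun j => if Nat.eqb (g j) i then u j ^ 2 else 0).
Proof. intros Hs Hb.
 set (w := fun l => rsum n (fun j => if Nat.eqb (g j) i then u j * A j l else 0)).
 set (U := rsum n (fun j => if Nat.eqb (g j) i then u j ^ 2 else 0)).
 set (N := nrm2 m w).
 assert (HU : 0 <= U) by (apply rsum_nonneg; intros; destruct (Nat.eqb (g i0) i); [apply pow2_ge_0|lra]).
 assert (HN : 0 <= N) by apply nrm2_nonneg.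
 assert (HP : N = rsum n (fun j => if Nat.eqb (g j) i then u j * rowdot m A j w else 0)).
 { unfold N, nrm2.
   rewrite (rsum_ext m _ (fun l => rsum n (fun j => w l * (if Nat.eqb (g j) i then u j * A j l else 0)))).
   2:{ intros l _. rewrite rsum_mult_l. unfold w. simpl. ring. }
   rewrite rsum_swap. apply rsum_ext. intros j _. destruct (Nat.eqb (g j) i).
   - unfold rowdot. rewrite <- rsum_mult_l. apply rsum_ext; intros; ring.
   - apply rsum_zero; intros; ring. }
 assert (Hkey : forall t, 0 < t -> 2 * N <= t * U + s ^ 2 * N / t).
 { intros t Ht. specialize (Hb w). fold N in Hb.
   assert (2 * N <= t * U + blk n m A g i w / t).
   { rewrite HP. unfold U, blk. rewrite <- rsum_mult_l. unfold Rdiv. rewrite (Rmult_comm _ (/ t)).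


     rewrite <- !rsum_mult_l, <- rsum_plus. apply rsum_le. intros j _.
     destruct (Nat.eqb (g j) i); [|lra].
     assert (0 <= (t * u j - rowdot m A j w) ^ 2) by apply pow2_ge_0.
     assert (E : t * u j ^ 2 + / t * rowdot m A j w ^ 2 - 2 * (u j * rowdot m A j w) = (t * u j - rowdot m A j w) ^ 2 / t) by (field; lra).
     assert (0 <= (t * u j - rowdot m A j w) ^ 2 / t) by (apply Rmult_le_pos; [auto|apply Rlt_le, Rinv_0_lt_compat; auto]).
     lra. }
   assert (blk n m A g i w / t <= s ^ 2 * N / t) by (apply Rmult_le_compat_r; [apply Rlt_le, Rinv_0_lt_compat; auto|auto]).
   lra. }
 destruct (Rle_lt_or_eq_dec 0 s Hs) as [Hsp|Hs0].
 - assert (Hs2 : 0 < s ^ 2) by (apply pow_lt; auto). specialize (Hkey (s ^ 2) Hs2).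
   assert (E : s ^ 2 * N / s ^ 2 = N) by (field; lra). rewrite E in Hkey. lra.
 - subst s. destruct (Rle_lt_or_eq_dec 0 N HN) as [HNp|HN0].
   + exfalso. assert (Ht : 0 < N / (U + 1)) by (apply Rdiv_lt_0_compat; lra).
     specialize (Hkey _ Ht). replace (0 ^ 2 * N / (N / (U + 1))) with 0 in Hkey by (field; lra).
     assert (N / (U + 1) * U < N).
     { assert (E : N / (U + 1) * U = N - N / (U + 1)) by (field; lra). rewrite E. lra. }
     lra.
   + rewrite <- HN0. nra.
Qed.

Lemma normal_eq n m A bv xs : is_lsq_minimizer n m A bv xs ->
  forall l, (l < m)%nat -> rsum n (fun j => (rowdot m A j xs - bv j) * A j l) = 0.
Proof. intros Hx l Hl.
 set (B := rsum n (fun j => (rowdot m A j xs - bv j) * A j l)).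
 set (C := rsum n (fun j => A j l ^ 2)).
 assert (HC : 0 <= C) by (apply rsum_nonneg; intros; apply pow2_ge_0).
 assert (B ^ 2 <= C * 0).
 { apply disc; auto. intros t.
   specialize (Hx (fun l' => xs l' + t * (if Nat.eqb l' l then 1 else 0))).
   assert (Hr : forall j, rowdot m A j (fun l' => xs l' + t * (if Nat.eqb l' l then 1 else 0)) = rowdot m A j xs + t * A j l).
   { intros j. rewrite rowdot_lin. f_equal. f_equal. unfold rowdot.
     rewrite (rsum_ext m _ (fun l' => if Nat.eqb l' l then A j l' else 0)).
     apply (rsum_kron_r m l (A j)); auto. intros; destruct (Nat.eqb i l); ring. }
   rewrite (rsum_ext n (fun j => (rowdot m A j (fun l' => xs l' + t * (if Nat.eqb l' l then 1 else 0)) - bv j) ^ 2)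
      (fun j => ((rowdot m A j xs - bv j) ^ 2 + (2 * t) * ((rowdot m A j xs - bv j) * A j l)) + t ^ 2 * A j l ^ 2)) in Hx.
   2:{ intros j _. rewrite Hr. ring. }
   rewrite !rsum_plus, !rsum_mult_l in Hx. fold B C in Hx. lra. }
 nra. Qed.

Lemma nrm2_sub_scal m e G a : nrm2 m (fun l => e l - a * G l) =
  nrm2 m e - 2 * a * rsum m (fun l => e l * G l) + a ^ 2 * nrm2 m G.
Proof. unfold nrm2. rewrite (rsum_ext m _ (fun l => (e l ^ 2 - (2 * a) * (e l * G l)) + a ^ 2 * G l ^ 2)) by (intros; ring).
 rewrite rsum_plus, rsum_minus, !rsum_mult_l. ring. Qed.

Lemma nrm2_add_le m x y : nrm2 m (fun l => x l + y l) <= 2 * nrm2 m x + 2 * nrm2 m y.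
Proof. unfold nrm2. rewrite <- !rsum_mult_l, <- rsum_plus. apply rsum_le. intros.
 assert (0 <= (x i - y i)^2) by apply pow2_ge_0. nra. Qed.

Lemma one_step n m d A bv xs g nrm p gamma S sig2 x :
  (forall j, (j < n)%nat -> (g j < d)%nat) ->
  (forall l, (l < m)%nat -> rsum n (fun j => (rowdot m A j xs - bv j) * A j l) = 0) ->
  (forall i, (i < d)%nat -> 0 <= nrm i /\ forall x, blk n m A g i x <= nrm i ^ 2 * nrm2 m x) ->
  (forall i, (i < d)%nat -> 0 < p i /\ nrm i ^ 2 <= 2 * S * p i /\ 1 <= 2 * INR d * p i) ->
  rsum d p = 1 -> 0 <= S ->
  (forall x, sig2 * nrm2 m x <= Qf n m A x) ->
  0 <= gamma -> 2 * gamma * S <= 1 ->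
  rsum d (fun i => p i * nrm2 m (fun l => sgd_step n m A bv g p gamma i x l - xs l))
  <= (1 - 2 * gamma * sig2 * (1 - 2 * gamma * S)) * nrm2 m (fun l => x l - xs l)
     + 4 * gamma ^ 2 * INR d * rsum d (fun i => nrm i ^ 2 * rsum n (fun j => if Nat.eqb (g j) i
                                       then (rowdot m A j xs - bv j) ^ 2 else 0)).
Proof.
 intros Hg Hne Hblk Hp Hps HS Hsig Hg0 HgS.
 set (e := fun l => x l - xs l).
 set (G := fun i l => rsum n (fun j => if Nat.eqb (g j) i then (rowdot m A j x - bv j) * A j l else 0)).
 set (H := fun i l => rsum n (fun j => if Nat.eqb (g j) i then rowdot m A j e * A j l else 0)).
 set (Rr := fun i l => rsum n (fun j => if Nat.eqb (g j) i then (rowdot m A j xs - bv j) * A j l else 0)).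
 set (res := fun i => rsum n (fun j => if Nat.eqb (g j) i then (rowdot m A j xs - bv j) ^ 2 else 0)).
 set (N := nrm2 m e).
 assert (HGHR : forall i l, G i l = H i l + Rr i l).
 { intros i l. unfold G, H, Rr. rewrite <- rsum_plus. apply rsum_ext. intros j _.
   unfold e. rewrite rowdot_sub. destruct (Nat.eqb (g j) i); ring. }
 assert (Hstep : forall i, (i < d)%nat -> p i * nrm2 m (fun l => sgd_step n m A bv g p gamma i x l - xs l)
    <= p i * N - 2 * gamma * rsum m (fun l => e l * G i l)
       + gamma ^ 2 * (4 * S * blk n m A g i e + 4 * INR d * (nrm i ^ 2 * res i))).
 { intros i Hi. destruct (Hp i Hi) as [Hp0 [Hp1 Hp2]]. destruct (Hblk i Hi) as [Hn0 Hb].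
   rewrite (nrm2_ext m _ (fun l => e l - gamma / p i * G i l)).
   2:{ intros l _. unfold sgd_step, e, G. ring. }
   rewrite nrm2_sub_scal. fold N.
   assert (HG : nrm2 m (G i) <= 2 * (nrm i ^ 2 * blk n m A g i e) + 2 * (nrm i ^ 2 * res i)).
   { rewrite (nrm2_ext m (G i) (fun l => H i l + Rr i l)) by (intros; apply HGHR).
     eapply Rle_trans; [apply nrm2_add_le|].
     assert (nrm2 m (H i) <= nrm i ^ 2 * blk n m A g i e).
     { unfold H, blk. apply (adj_bound n m A g i (nrm i) (fun j => rowdot m A j e)); auto. }
     assert (nrm2 m (Rr i) <= nrm i ^ 2 * res i).
     { unfold Rr, res. apply (adj_bound n m A g i (nrm i) (fun j => rowdot m A j xs - bv j)); auto. }
     lra. }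
   assert (Hbk : 0 <= blk n m A g i e) by apply blk_nonneg.
   assert (Hres : 0 <= res i) by (apply rsum_nonneg; intros; destruct (Nat.eqb (g i0) i); [apply pow2_ge_0|lra]).
   assert (E : p i * (N - 2 * (gamma / p i) * rsum m (fun l => e l * G i l) + (gamma / p i) ^ 2 * nrm2 m (G i))
      = p i * N - 2 * gamma * rsum m (fun l => e l * G i l) + gamma ^ 2 * (nrm2 m (G i) / p i)) by (field; lra).
   rewrite E.
   assert (nrm2 m (G i) / p i <= 4 * S * blk n m A g i e + 4 * INR d * (nrm i ^ 2 * res i)).
   { assert (Hip : 0 < / p i) by (apply Rinv_0_lt_compat; auto).
     assert (nrm2 m (G i) / p i <= (2 * (nrm i ^ 2 * blk n m A g i e) + 2 * (nrm i ^ 2 * res i)) / p i)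
       by (apply Rmult_le_compat_r; lra).
     assert (E2 : (2 * (nrm i ^ 2 * blk n m A g i e) + 2 * (nrm i ^ 2 * res i)) / p i
        = 2 * blk n m A g i e * (nrm i ^ 2 / p i) + 2 * (nrm i ^ 2 * res i) * (1 / p i)) by (field; lra).
     assert (nrm i ^ 2 / p i <= 2 * S).
     { apply (Rmult_le_reg_r (p i)); auto. replace (nrm i ^ 2 / p i * p i) with (nrm i ^ 2) by (field; lra). lra. }
     assert (1 / p i <= 2 * INR d).
     { apply (Rmult_le_reg_r (p i)); auto. replace (1 / p i * p i) with 1 by (field; lra). lra. }
     assert (0 <= nrm i ^ 2 * res i) by (apply Rmult_le_pos; [apply pow2_ge_0|auto]).
     assert (2 * blk n m A g i e * (nrm i ^ 2 / p i) <= 2 * blk n m A g i e * (2 * S)) by (apply Rmult_le_compat_l; lra).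
     assert (2 * (nrm i ^ 2 * res i) * (1 / p i) <= 2 * (nrm i ^ 2 * res i) * (2 * INR d)) by (apply Rmult_le_compat_l; lra).
     lra. }
   assert (0 <= gamma ^ 2) by apply pow2_ge_0.
   assert (gamma ^ 2 * (nrm2 m (G i) / p i) <= gamma ^ 2 * (4 * S * blk n m A g i e + 4 * INR d * (nrm i ^ 2 * res i)))
     by (apply Rmult_le_compat_l; auto).
   lra. }
 eapply Rle_trans; [apply rsum_le; exact Hstep|].
 rewrite (rsum_ext d _ (fun i => ((p i * N + (-2*gamma) * rsum m (fun l => e l * G i l)) + (gamma^2*4*S) * blk n m A g i e) + (gamma^2*4*INR d) * (nrm i ^2 * res i))) by (intros; ring).
 rewrite !rsum_plus, !rsum_mult_l, rsum_mult_r, Hps.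
 assert (Hblks : rsum d (fun i => blk n m A g i e) = Qf n m A e) by (unfold blk, Qf; apply rsum_partition; auto).
 assert (Hcross : rsum d (fun i => rsum m (fun l => e l * G i l)) = Qf n m A e).
 { rewrite rsum_swap. rewrite Qf_dual. apply rsum_ext. intros l Hl. rewrite rsum_mult_l. f_equal.
   unfold G. rewrite (rsum_partition n d g (fun j => (rowdot m A j x - bv j) * A j l)) by auto.
   rewrite (rsum_ext n _ (fun j => rowdot m A j e * A j l + (rowdot m A j xs - bv j) * A j l)).
   2:{ intros. unfold e. rewrite rowdot_sub. ring. }
   rewrite rsum_plus, Hne by auto. rewrite Rplus_0_r. apply rsum_ext; intros; ring. }
 rewrite Hblks, Hcross. fold res.
 specialize (Hsig e). fold N in Hsig.
 assert (0 <= 2 * gamma * (1 - 2 * gamma * S)) by (apply Rmult_le_pos; lra).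
 assert (2 * gamma * (1 - 2 * gamma * S) * (sig2 * N) <= 2 * gamma * (1 - 2 * gamma * S) * Qf n m A e)
   by (apply Rmult_le_compat_l; auto).
 unfold res. set (WW := rsum d _). set (QQ := Qf n m A e). match goal with |- ?L <= ?R => assert (EE : L - R = 2 * gamma * (1 - 2 * gamma * S) * (sig2 * N) - 2 * gamma * (1 - 2 * gamma * S) * QQ) by ring end. apply Rminus_le. rewrite EE. apply Rle_minus. exact H1.
Qed.

Lemma iter_S n m A bv g p gamma x0 s k : sgd_iter n m A bv g p gamma x0 s (S k) =
  sgd_step n m A bv g p gamma (s k) (sgd_iter n m A bv g p gamma x0 s k).
Proof. reflexivity. Qed.

Lemma iter_scons n m A bv g p gamma x0 i s k :
  sgd_iter n m A bv g p gamma x0 (scons i s) (S k) =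
  sgd_iter n m A bv g p gamma (sgd_step n m A bv g p gamma i x0) s k.
Proof. induction k. - reflexivity.
 - rewrite iter_S. rewrite IHk. rewrite (iter_S _ _ _ _ _ _ _ _ s). reflexivity. Qed.

Lemma expect_ext d p k F G : (forall s, F s = G s) -> expect d p k F = expect d p k G.
Proof. revert F G. induction k; intros F G H; simpl. - apply H.
 - apply rsum_ext. intros i _. f_equal. apply IHk. intros; apply H. Qed.

Lemma iterate n m d A bv xs g p gamma rho c R :
  (forall i, (i < d)%nat -> 0 <= p i) -> rsum d p = 1 -> 0 <= rho -> c <= (1 - rho) * R ->
  (forall x, rsum d (fun i => p i * nrm2 m (fun l => sgd_step n m A bv g p gamma i x l - xs l))
       <= rho * nrm2 m (fun l => x l - xs l) + c) ->
  forall k x, expect d p k (fun s => nrm2 m (fun l => sgd_iter n m A bv g p gamma x s k l - xs l))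
     <= rho ^ k * (nrm2 m (fun l => x l - xs l) - R) + R.
Proof. intros Hp Hps Hr Hc Hone k. induction k; intros x.
 - simpl. lra.
 - change (expect d p (S k) ?F) with (rsum d (fun i => p i * expect d p k (fun s => F (scons i s)))).
   cbv beta.
   eapply Rle_trans.
   { apply rsum_le. intros i Hi.
     rewrite (expect_ext d p k _ (fun s => nrm2 m (fun l => sgd_iter n m A bv g p gamma (sgd_step n m A bv g p gamma i x) s k l - xs l)))
       by (intros s; rewrite iter_scons; reflexivity).
     apply Rmult_le_compat_l; [apply Hp; auto|]. apply IHk. }
   rewrite (rsum_ext d _ (fun i => rho ^ k * (p i * nrm2 m (fun l => sgd_step n m A bv g p gamma i x l - xs l)) + (R - rho ^ k * R) * p i)) by (intros; ring).
   rewrite rsum_plus, rsum_mult_l, rsum_mult_l, Hps.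
   specialize (Hone x). assert (0 <= rho ^ k) by (apply pow_le; auto).
   assert (rho ^ k * rsum d (fun i => p i * nrm2 m (fun l => sgd_step n m A bv g p gamma i x l - xs l)) <= rho ^ k * (rho * nrm2 m (fun l => x l - xs l) + c))
     by (apply Rmult_le_compat_l; auto).
   assert (rho ^ k * c <= rho ^ k * ((1 - rho) * R)) by (apply Rmult_le_compat_l; auto).
   simpl. nra.
Qed.

Lemma rsum_const d a : rsum d (fun _ => a) = INR d * a.
Proof. induction d; simpl rsum. simpl; ring. rewrite IHd, S_INR. ring. Qed.

Lemma exp_pow a k : exp a ^ k = exp (INR k * a).
Proof. induction k. simpl. rewrite Rmult_0_l, exp_0. reflexivity.
 simpl pow. rewrite IHk, S_INR, <- exp_plus. f_equal. ring. Qed.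

Lemma ceil_ge z : z <= INR (Z.to_nat (ceilR z)).
Proof. unfold ceilR, Int_part. destruct (archimed (- z)) as [_ H].
 assert (E : IZR (- (up (- z) - 1)) = 1 - IZR (up (- z))) by (rewrite opp_IZR, minus_IZR; ring).
 destruct (Z_lt_le_dec (- (up (- z) - 1)) 0) as [Hl|Hl].
 - apply IZR_lt in Hl. rewrite E in Hl. pose proof (pos_INR (Z.to_nat (- (up (- z) - 1)))). lra.
 - rewrite INR_IZR_INZ, Z2Nat.id by lia. rewrite E. lra. Qed.

Theorem corollary3p1
  (n m d bsz : nat) (A : nat -> nat -> R) (bv : nat -> R) (xs : nat -> R)
  (g : nat -> nat) (nrm : nat -> R) (sigma : R)
  (eps : R) (x0 : nat -> R)
  (HA : full_column_rank n m A)
  (Hxs : is_lsq_minimizer n m A bv xs)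
  (Hb : (0 < bsz)%nat)
  (Hn : n = (d * bsz)%nat)
  (Hg : is_batch_partition n d bsz g)
  (Hnrm : forall i, (i < d)%nat -> is_block_spectral_norm n m A g i (nrm i))
  (Hsig : is_sigma_min n m A sigma)
  (Heps : 0 < eps) :
  let S := rsum d (fun i => nrm i ^ 2) in
  let res := fun i => rsum n (fun j => if Nat.eqb (g j) i
                                       then (rowdot m A j xs - bv j) ^ 2 else 0) in
  let W := rsum d (fun i => nrm i ^ 2 * res i) in
  let p := fun i => INR bsz / (2 * INR n) + / 2 * (nrm i ^ 2 / S) in
  let gamma := (/ 4 * eps) / (eps * S + INR d * / sigma ^ 2 * W) in
  let eps0 := nrm2 m (fun l => x0 l - xs l) in
  let k := Z.to_nat (ceilR (4 * ln (2 * eps0 / eps) *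
              (/ sigma ^ 2 * S + INR d * / sigma ^ 4 * W / eps))) in
  expect d p k (fun s => nrm2 m (fun l => sgd_iter n m A bv g p gamma x0 s k l - xs l))
    <= eps.
Proof.
 intros S res W p gamma eps0 k.
 destruct (sigma_facts n m A sigma HA Hsig) as [Hm [Hs0 [Hray [v0 [Hv0 HQv0]]]]].
 destruct Hg as [Hg1 _].
 assert (Hblk : forall i, (i < d)%nat -> 0 <= nrm i /\ forall x, blk n m A g i x <= nrm i ^ 2 * nrm2 m x)
   by (intros; apply blk_bound; auto).
 assert (Hsig2 : 0 < sigma ^ 2) by (apply pow_lt; auto).
 assert (HSv : sigma ^ 2 <= S).
 { assert (E : Qf n m A v0 = rsum d (fun i => blk n m A g i v0)) by (unfold blk, Qf; symmetry; apply rsum_partition; auto).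
   assert (rsum d (fun i => blk n m A g i v0) <= rsum d (fun i => nrm i ^ 2 * nrm2 m v0)) by (apply rsum_le; intros; apply Hblk; auto).
   rewrite rsum_mult_r in H. fold S in H. rewrite <- E, HQv0 in H.
   apply (Rmult_le_reg_r (nrm2 m v0)); auto. }
 assert (HS : 0 < S) by lra.
 assert (Hd : (0 < d)%nat).
 { destruct d; [|lia]. exfalso. unfold S in HS. simpl in HS. lra. }
 assert (Hres : forall i, 0 <= res i) by (intros; apply rsum_nonneg; intros; destruct (Nat.eqb (g i0) i); [apply pow2_ge_0|lra]).
 assert (HW : 0 <= W) by (apply rsum_nonneg; intros; apply Rmult_le_pos; [apply pow2_ge_0|auto]).
 assert (Hdpos : 0 < INR d) by (apply lt_0_INR; auto).
 assert (Hbpos : 0 < INR bsz) by (apply lt_0_INR; auto).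
 assert (HnI : INR n = INR d * INR bsz) by (rewrite Hn, mult_INR; reflexivity).
 assert (Hp1 : INR bsz / (2 * INR n) = / (2 * INR d)) by (rewrite HnI; field; lra).
 assert (Hp : forall i, (i < d)%nat -> 0 < p i /\ nrm i ^ 2 <= 2 * S * p i /\ 1 <= 2 * INR d * p i).
 { intros i Hi. unfold p. rewrite Hp1.
   assert (0 <= nrm i ^ 2 / S) by (apply Rmult_le_pos; [apply pow2_ge_0|apply Rlt_le, Rinv_0_lt_compat; auto]).
   assert (0 < / (2 * INR d)) by (apply Rinv_0_lt_compat; lra).
   split; [lra|]. split.
   - assert (E : 2 * S * (/ (2 * INR d) + / 2 * (nrm i ^ 2 / S)) = S / INR d + nrm i ^ 2) by (field; lra).
     rewrite E. assert (0 <= S / INR d) by (apply Rmult_le_pos; [lra|apply Rlt_le, Rinv_0_lt_compat; auto]). lra.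
   - assert (E : 2 * INR d * (/ (2 * INR d) + / 2 * (nrm i ^ 2 / S)) = 1 + INR d * (nrm i ^ 2 / S)) by (field; lra).
     rewrite E. assert (0 <= INR d * (nrm i ^ 2 / S)) by (apply Rmult_le_pos; lra). lra. }
 assert (Hps : rsum d p = 1).
 { unfold p. rewrite rsum_plus, rsum_const, Hp1.
   rewrite (rsum_ext d _ (fun i => (/ 2 * / S) * nrm i ^ 2)) by (intros; unfold Rdiv; ring).
   rewrite rsum_mult_l. fold S. field. lra. }
 assert (Hne := normal_eq n m A bv xs Hxs).
 set (Q := INR d * / sigma ^ 2 * W).
 assert (HQ : 0 <= Q) by (unfold Q; apply Rmult_le_pos; [apply Rmult_le_pos; [lra|apply Rlt_le, Rinv_0_lt_compat; auto]|auto]).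
 set (D := eps * S + Q).
 assert (HD : 0 < D) by (unfold D; nra).
 assert (Hgam : gamma * D = eps / 4) by (unfold gamma; fold Q; fold D; field; lra).
 assert (Hg0 : 0 < gamma) by (unfold gamma; fold Q; fold D; apply Rdiv_lt_0_compat; lra).
 assert (HgS : 2 * gamma * S <= 1 / 2).
 { assert (gamma * Q >= 0) by nra. assert (gamma * (eps * S) <= eps / 4) by (unfold D in Hgam; lra).
   assert (gamma * S <= 1 / 4) by (apply (Rmult_le_reg_l eps); auto; nra). lra. }
 set (rho := 1 - 2 * gamma * sigma ^ 2 * (1 - 2 * gamma * S)).
 set (c := 4 * gamma ^ 2 * INR d * W).
 assert (Hone : forall x, rsum d (fun i => p i * nrm2 m (fun l => sgd_step n m A bv g p gamma i x l - xs l))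
       <= rho * nrm2 m (fun l => x l - xs l) + c).
 { intros x. apply (one_step n m d A bv xs g nrm p gamma S (sigma ^ 2) x); auto; lra. }
 assert (Hrho0 : 0 <= rho).
 { unfold rho. assert (0 <= 1 - 2 * gamma * S) by lra.
   assert (2 * gamma * sigma ^ 2 * (1 - 2 * gamma * S) <= 2 * gamma * sigma ^ 2 * 1) by (apply Rmult_le_compat_l; nra).
   nra. }
 assert (Hc : c <= (1 - rho) * (eps / 2)).
 { assert (EdW : INR d * W = sigma ^ 2 * Q) by (unfold Q; field; lra).
   assert (E1 : c = gamma * sigma ^ 2 * (4 * gamma * Q)) by (unfold c; rewrite Rmult_assoc, EdW; ring).
   assert (E2 : (1 - rho) * (eps / 2) = gamma * sigma ^ 2 * ((1 - 2 * gamma * S) * eps)) by (unfold rho; field).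
   rewrite E1, E2. apply Rmult_le_compat_l; [nra|].
   unfold D in Hgam. assert (0 <= gamma * S * eps) by (apply Rmult_le_pos; nra). nra. }
 assert (Hpnn : forall i, (i < d)%nat -> 0 <= p i) by (intros i Hi; destruct (Hp i Hi); lra).
 pose proof (iterate n m d A bv xs g p gamma rho c (eps / 2) Hpnn Hps Hrho0 Hc Hone k x0) as Hit.
 fold eps0 in Hit. eapply Rle_trans; [exact Hit|].
 assert (Hrk : 0 <= rho ^ k) by (apply pow_le; auto).
 destruct (Rle_or_lt eps0 (eps / 2)) as [Hsmall|Hbig].
 - assert (rho ^ k * (eps0 - eps / 2) <= 0) by (assert (0 <= rho ^ k * (eps / 2 - eps0)) by (apply Rmult_le_pos; lra); lra). lra.
 - set (L := ln (2 * eps0 / eps)).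
   assert (Hratio : 1 < 2 * eps0 / eps) by (apply (Rmult_lt_reg_r eps); auto; unfold Rdiv; rewrite Rmult_assoc, Rinv_l by lra; lra).
   assert (HL : 0 < L) by (unfold L; rewrite <- ln_1; apply ln_increasing; lra).
   set (X := / sigma ^ 2 * S + INR d * / sigma ^ 4 * W / eps).
   assert (HX : gamma * sigma ^ 2 * X = / 4).
   { unfold X, gamma. field. split; [lra|]. split; [lra|]. assert (0 < eps * S * sigma ^ 2) by (apply Rmult_lt_0_compat; [apply Rmult_lt_0_compat|]; lra). assert (0 <= INR d * W) by (apply Rmult_le_pos; lra). lra. }
   assert (Hk : 4 * L * X <= INR k) by (unfold k; fold L; fold X; apply ceil_ge).
   assert (Hkg : L <= INR k * (gamma * sigma ^ 2)).
   { assert (0 < gamma * sigma ^ 2) by nra.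
     assert (4 * L * X * (gamma * sigma ^ 2) <= INR k * (gamma * sigma ^ 2)) by (apply Rmult_le_compat_r; lra).
     assert (E : 4 * L * X * (gamma * sigma ^ 2) = L * (4 * (gamma * sigma ^ 2 * X))) by ring.
     rewrite E, HX in H0. lra. }
   assert (Hrho1 : rho <= exp (- (gamma * sigma ^ 2))).
   { pose proof (exp_ineq1_le (- (gamma * sigma ^ 2))).
     assert (rho <= 1 - gamma * sigma ^ 2).
     { unfold rho. assert (0 <= gamma * sigma ^ 2) by nra.
       assert (gamma * sigma ^ 2 * (1 - 4 * gamma * S) >= 0) by (apply Rle_ge, Rmult_le_pos; lra). nra. }
     lra. }
   assert (Hpk : rho ^ k <= exp (- L)).
   { eapply Rle_trans. apply pow_incr. split; [auto|exact Hrho1].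
     rewrite exp_pow. assert (INR k * - (gamma * sigma ^ 2) <= - L) by lra.
     destruct (Rle_lt_or_eq_dec _ _ H). apply Rlt_le, exp_increasing; auto. rewrite e; lra. }
   assert (HeL : exp (- L) = eps / (2 * eps0)).
   { rewrite exp_Ropp. unfold L. rewrite exp_ln by lra. field. lra. }
   assert (rho ^ k * eps0 <= eps / 2).
   { assert (rho ^ k * eps0 <= exp (- L) * eps0) by (apply Rmult_le_compat_r; lra).
     rewrite HeL in H. replace (eps / (2 * eps0) * eps0) with (eps / 2) in H by (field; lra). lra. }
   assert (rho ^ k * (eps / 2) >= 0) by (apply Rle_ge, Rmult_le_pos; lra).
   nra.
Qed.
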